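(* The Laurent polynomial $f_\lambda$ is nondegenerate relative to $\Delta(A)$: for every face $\sigma$ of $\Delta(A)$ not containing the origin, the Laurent polynomials $x_i\partial f^\sigma_\lambda/\partial x_i$, $i=1,\dots,n$, have no common zero in $\big(\overline{\mathbb C(\lambda)}^\times\big)^n$.
   Context: Let $A=\{\mathbf a_1,\dots,\mathbf a_m\}\subseteq\mathbb Z^n$ be linearly independent over $\mathbb R$, $\mathbf a_0\in\mathbb Z^n$, and $\ell_0,\dots,\ell_m$ positive integers with gcd $1$ such that $\ell_0\mathbf a_0=\sum_{j=1}^m\ell_j\mathbf a_j$ and $\ell_0=\sum_{j=1}^m\ell_j$. Let $f_\lambda=\sum_{j=1}^m\ell_jx^{\mathbf a_j}-\ell_0\lambda x^{\mathbf a_0}$, $\lambda$ an indeterminate, and $\overline{\mathbb C(\lambda)}$ an algebraic closure of $\mathbb C(\lambda)$. Let $\Delta(A)$ be the convex hull of $A\cup\{\mathbf 0\}$. For a face $\sigma$ of $\Delta(A)$ not containing $\mathbf a_0$ set $f^\sigma_\lambda=\sum_{\mathbf a_j\in\sigma}\ell_jx^{\mathbf a_j}$; for a face containing $\mathbf a_0$ set $f^\sigma_\lambda=f_\lambda$. *)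

(* Defs.v *)
From HB Require Import structures.
From mathcomp Require Import all_boot all_order all_algebra.
From mathcomp Require Import boolp reals.
From mathcomp Require Import complex.
Set Implicit Arguments. Unset Strict Implicit. Unset Printing Implicit Defensive.
Import Order.TTheory GRing.Theory Num.Theory.
Local Open Scope ring_scope.

Definition dotv {R : realType} {n : nat} (w p : 'rV[R]_n) : R :=
  \sum_(i < n) w 0 i * p 0 i.

Definition rV_of_int {R : realType} {n : nat} (a : 'rV[int]_n) : 'rV[R]_n :=
  map_mx (fun z : int => z%:~R) a.

Definition conv_hull {R : realType} {n k : nat} (P : 'I_k -> 'rV[R]_n)
  (p : 'rV[R]_n) : Prop :=
  exists t : 'I_k -> R, (forall i, 0 <= t i) /\ \sum_(i < k) t i = 1 /\
                        p = \sum_(i < k) t i *: P i.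

Definition Delta_pts {R : realType} {n m : nat} (a : 'I_m -> 'rV[int]_n)
  (i : 'I_m.+1) : 'rV[R]_n :=
  match unlift ord0 i with Some j => rV_of_int (a j) | None => 0 end.

Definition Delta {R : realType} {n m : nat} (a : 'I_m -> 'rV[int]_n) :
  'rV[R]_n -> Prop := conv_hull (Delta_pts (R := R) a).

(* A (nonempty) face of a convex set P, cut out by a supporting hyperplane
   w . p = c with w . p <= c on P (w = 0, c = 0 gives P itself). *)
Definition is_face_data {R : realType} {n : nat} (P : 'rV[R]_n -> Prop)
  (w : 'rV[R]_n) (c : R) : Prop :=
  (forall p, P p -> dotv w p <= c) /\ (exists p, P p /\ dotv w p = c).

Definition face_pts {R : realType} {n : nat} (P : 'rV[R]_n -> Prop)
  (w : 'rV[R]_n) (c : R) (p : 'rV[R]_n) : Prop := P p /\ dotv w p = c.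

(* A Laurent polynomial in x_1..x_n is represented as a finite list of terms
   (coefficient, exponent vector), meaning  sum c * x^e. *)
Definition laurent (K : fieldType) (n : nat) := seq (K * 'rV[int]_n).

Definition monom {K : fieldType} {n : nat} (x : 'rV[K]_n) (e : 'rV[int]_n) : K :=
  \prod_(i < n) (x 0 i) ^ (e 0 i).

Definition leval {K : fieldType} {n : nat} (f : laurent K n) (x : 'rV[K]_n) : K :=
  \sum_(t <- f) t.1 * monom x t.2.

(* the operator x_i d/dx_i : c x^e |-> c e_i x^e *)
Definition xdx {K : fieldType} {n : nat} (i : 'I_n) (f : laurent K n) : laurent K n :=
  [seq (t.1 * ((t.2 : 'rV[int]_n) 0 i)%:~R, t.2) | t <- f].

Definition f_lam {K : fieldType} {n m : nat} (a : 'I_m -> 'rV[int]_n)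
  (a0 : 'rV[int]_n) (l : 'I_m -> nat) (l0 : nat) (lam : K) : laurent K n :=
  rcons [seq ((l j)%:R, a j) | j <- enum 'I_m] (- (l0%:R * lam), a0).

Definition f_sigma {K : fieldType} {R : realType} {n m : nat}
  (a : 'I_m -> 'rV[int]_n) (a0 : 'rV[int]_n) (l : 'I_m -> nat) (l0 : nat)
  (lam : K) (inS : 'rV[R]_n -> Prop) : laurent K n :=
  if `[< inS (rV_of_int a0) >] then f_lam a a0 l l0 lam
  else [seq ((l j)%:R, a j) | j <- enum 'I_m & `[< inS (rV_of_int (a j)) >]].

Definition Clam (R : realType) := {fraction {poly R[i]}}.

Definition lamC (R : realType) : Clam R := @FracField.tofrac _ ('X : {poly R[i]}).

(* K together with iota : C(lambda) -> K is an algebraic closure of C(lambda):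
   K is algebraically closed and algebraic over the image of iota. *)
Definition is_alg_closure (R : realType) (K : closedFieldType)
  (iota : {rmorphism Clam R -> K}) : Prop :=
  forall y : K, exists p : {poly Clam R}, p != 0 /\ root (map_poly iota p) y.

(* Main.v *)
Require Import Defs.
From HB Require Import structures.
From mathcomp Require Import all_boot all_order all_algebra.
From mathcomp Require Import boolp reals complex.
From mathcomp Require Import ring.
Import Order.TTheory GRing.Theory Num.Theory.
Local Open Scope ring_scope.

Module Helpers.
Set Implicit Arguments. Unset Strict Implicit. Unset Printing Implicit Defensive.
Section Helpers.
Variables (R : realType) (n m : nat) (a : 'I_m -> 'rV[int]_n).

Definition Mint : 'M[int]_(m, n) := \matrix_(j, k) a j 0 k.

Lemma row_MR (j : 'I_m) : row j (map_mx (fun z : int => z%:~R : R) Mint) = rV_of_int (a j).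
Proof. by apply/rowP => k; rewrite !mxE. Qed.

Lemma freeR (hA : forall c : 'I_m -> R,
      \sum_(j < m) c j *: rV_of_int (a j) = 0 -> forall j, c j = 0) :
  row_free (map_mx (fun z : int => z%:~R : R) Mint).
Proof.
apply: inj_row_free => v hv; apply/rowP => j; rewrite mxE.
apply: (hA (fun j => v 0 j)).
rewrite -[RHS]hv mulmx_sum_row; apply: eq_bigr => i _; by rewrite row_MR.
Qed.

Lemma dotv_sum k (w : 'rV[R]_n) (t : 'I_k -> R) (P : 'I_k -> 'rV[R]_n) :
  dotv w (\sum_(i < k) t i *: P i) = \sum_(i < k) t i * dotv w (P i).
Proof.
rewrite /dotv; under eq_bigr do rewrite summxE mulr_sumr.
rewrite exchange_big /=; apply: eq_bigr => i _; rewrite mulr_sumr.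
by apply: eq_bigr => j _; rewrite mxE mulrCA.
Qed.

Lemma dotv0 (w : 'rV[R]_n) : dotv w 0 = 0.
Proof. by rewrite /dotv big1 // => i _; rewrite mxE mulr0. Qed.

Lemma conv_pt k (P : 'I_k -> 'rV[R]_n) i0 : conv_hull P (P i0).
Proof.
exists (fun i => (i == i0)%:R); split; first by move=> i; rewrite ler0n.
split.
  by rewrite (bigD1 i0) //= big1 ?addr0 ?eqxx // => i /negbTE ->.
by rewrite (bigD1 i0) //= big1 ?addr0 ?eqxx ?scale1r // => i /negbTE ->; rewrite scale0r.
Qed.

Lemma Delta0 : Delta (R := R) a 0.
Proof.
have -> : (0 : 'rV[R]_n) = Delta_pts a ord0 by rewrite /Delta_pts unlift_none.
exact: conv_pt.
Qed.

Lemma Delta_a j : Delta (R := R) a (rV_of_int (a j)).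
Proof.
have -> : rV_of_int (a j) = Delta_pts (R := R) a (lift ord0 j) by rewrite /Delta_pts liftK.
exact: conv_pt.
Qed.

Lemma face_vertex (w : 'rV[R]_n) (c : R)
  (hface : is_face_data (Delta (R := R) a) w c)
  (h0 : ~ face_pts (Delta (R := R) a) w c 0) :
  exists j, face_pts (Delta (R := R) a) w c (rV_of_int (a j)).
Proof.
case: hface => hle [p [hp hpc]].
have c0 : 0 < c.
  have := hle _ Delta0; rewrite dotv0 => hc.
  rewrite lt_def hc andbT; apply/eqP => e.
  by apply: h0; split; [exact: Delta0| rewrite dotv0 e].
apply/not_existsP => hno.
have hlt : forall i, dotv w (Delta_pts (R := R) a i) < c.
  move=> i; rewrite /Delta_pts; case: unliftP => [j _|_]; last by rewrite dotv0.
  rewrite lt_def (hle _ (Delta_a j)) andbT; apply/eqP => e.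
  by apply: (hno j); split; [exact: Delta_a|].
have hgt : forall i, 0 < c - dotv w (Delta_pts (R := R) a i) by move=> i; rewrite subr_gt0.
case: hp => t [t0 [t1 tp]].
have : \sum_(i < m.+1) t i * (c - dotv w (Delta_pts a i)) = 0.
  under eq_bigr do rewrite mulrBr.
  by rewrite sumrB -mulr_suml t1 mul1r -dotv_sum -tp hpc subrr.
move/psumr_eq0P => h; have {}h := h (fun i _ => mulr_ge0 (t0 i) (ltW (hgt i))).
have tz : forall i, t i = 0.
  move=> i; have /eqP := h i isT.
  by rewrite mulf_eq0 (negbTE (lt0r_neq0 (hgt i))) orbF => /eqP.
by move: t1; rewrite big1 // => /eqP; rewrite eq_sym oner_eq0.
Qed.

End Helpers.
Section KHelpers.
Variables (R : realType) (K : closedFieldType) (iota : {rmorphism Clam R -> K}).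

Definition gK : {rmorphism R -> K} :=
  (iota \o (@FracField.tofrac _) \o polyC \o (real_complex R)).

Lemma natrK_neq0 k : (0 < k)%N -> (k%:R : K) != 0.
Proof.
move=> hk; rewrite -(rmorph_nat gK) fmorph_eq0 pnatr_eq0 -lt0n //.
Qed.

Variables (n m : nat) (a : 'I_m -> 'rV[int]_n).

Lemma indK (hA : forall c : 'I_m -> R,
      \sum_(j < m) c j *: rV_of_int (a j) = 0 -> forall j, c j = 0)
  (d : 'I_m -> K) :
  (forall i : 'I_n, \sum_(j < m) d j * (a j 0 i)%:~R = 0) -> forall j, d j = 0.
Proof.
move=> hd j.
have fr : row_free (map_mx (fun z : int => z%:~R : K) (Mint a)).
  have -> : map_mx (fun z : int => z%:~R : K) (Mint a) =
            map_mx gK (map_mx (fun z : int => z%:~R : R) (Mint a)).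
    by apply/matrixP => p q; rewrite !mxE rmorph_int.
  by rewrite row_free_map; exact: freeR.
have : (\row_j d j) *m map_mx (fun z : int => z%:~R : K) (Mint a) = 0 *m map_mx (fun z : int => z%:~R : K) (Mint a).
  rewrite mul0mx; apply/rowP => i; rewrite !mxE.
  transitivity (\sum_(j<m) d j * (a j 0 i)%:~R); last exact: hd i.
  by apply: eq_bigr => k _; rewrite !mxE.
move/(row_free_inj fr)/rowP/(_ j); by rewrite !mxE.
Qed.

Lemma monom_neq0 (x : 'rV[K]_n) e : (forall i, x 0 i != 0) -> monom x e != 0.
Proof. by move=> hx; rewrite /monom prodf_seq_neq0; apply/allP => i _; rewrite expfz_neq0. Qed.

Lemma monomD (x : 'rV[K]_n) e1 e2 : (forall i, x 0 i != 0) ->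
  monom x (e1 + e2) = monom x e1 * monom x e2.
Proof.
move=> hx; rewrite /monom -big_split; apply: eq_bigr => i _.
by rewrite mxE expfzDr.
Qed.

Lemma monom0 (x : 'rV[K]_n) : monom x 0 = 1.
Proof. by rewrite /monom big1 // => i _; rewrite mxE expr0z. Qed.

Lemma monom_sum (x : 'rV[K]_n) k (F : 'I_k -> 'rV[int]_n) : (forall i, x 0 i != 0) ->
  monom x (\sum_(j < k) F j) = \prod_(j < k) monom x (F j).
Proof.
move=> hx; apply: (big_morph (monom x)) => [e1 e2|]; [exact: monomD| exact: monom0].
Qed.

Lemma monomMn (x : 'rV[K]_n) e k : (forall i, x 0 i != 0) ->
  monom x (e *+ k) = monom x e ^+ k.
Proof.
move=> hx; elim: k => [|k IH]; first by rewrite mulr0n monom0 expr0.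
by rewrite mulrS monomD // IH exprS.
Qed.

Lemma leval_xdx (x : 'rV[K]_n) i (f : laurent K n) :
  leval (xdx i f) x = \sum_(t <- f) t.1 * (t.2 0 i)%:~R * monom x t.2.
Proof. by rewrite /leval /xdx big_map. Qed.

End KHelpers.
End Helpers.
Import Helpers.

Theorem proposition5p1
  (R : realType) (n m : nat)
  (a : 'I_m -> 'rV[int]_n) (a0 : 'rV[int]_n)
  (l : 'I_m -> nat) (l0 : nat)
  (* A = {a_1, ..., a_m} is linearly independent over the reals *)
  (hA : forall c : 'I_m -> R,
      \sum_(j < m) c j *: rV_of_int (a j) = 0 -> forall j, c j = 0)
  (* l_0, ..., l_m positive integers with gcd 1 *)
  (hl : forall j, (0 < l j)%N) (hl0 : (0 < l0)%N)
  (hgcd : gcdn l0 (\big[gcdn/0%N]_(j < m) l j) = 1%N)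
  (* l_0 a_0 = sum_j l_j a_j  and  l_0 = sum_j l_j *)
  (hrel : (l0%:Z) *: a0 = \sum_(j < m) (l j)%:Z *: a j)
  (hsum : l0 = (\sum_(j < m) l j)%N)
  (* K is an algebraic closure of C(lambda) via iota *)
  (K : closedFieldType) (iota : {rmorphism Clam R -> K})
  (hK : is_alg_closure iota)
  (* sigma = {p in Delta(A) | w.p = c} is a (nonempty) face of Delta(A) *)
  (w : 'rV[R]_n) (c : R)
  (hface : is_face_data (Delta (R := R) a) w c)
  (* sigma does not contain the origin *)
  (h0 : ~ face_pts (Delta (R := R) a) w c 0) :
  ~ (exists x : 'rV[K]_n, (forall i, x 0 i != 0) /\
       forall i : 'I_n,
         leval (xdx i (f_sigma a a0 l l0 (iota (lamC R))
                                (face_pts (Delta (R := R) a) w c))) x = 0).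
Proof.
case=> x [hx H].
have [j0 hj0] := face_vertex hface h0.
move: H; rewrite /f_sigma; case: ifP => ha0 H.
  set lam := iota (lamC R).
  have hr i : (l0%:R : K) * (a0 0 i)%:~R = \sum_j (l j)%:R * (a j 0 i)%:~R.
    have := congr1 (fun v : 'rV[int]_n => ((v 0 i)%:~R : K)) hrel.
    rewrite /= !mxE summxE rmorph_sum intrM /= => ->.
    by apply: eq_bigr => j _; rewrite mxE intrM.
  have H' i : \sum_j ((l j)%:R * (monom x (a j) - lam * monom x a0)) * (a j 0 i)%:~R = 0.
    have Hi := H i; rewrite leval_xdx /f_lam -cats1 big_cat big_seq1 big_map big_enum /= in Hi.
    apply: etrans _ Hi.
    have e : \sum_j ((l j)%:R * (monom x (a j) - lam * monom x a0)) * (a j 0 i)%:~R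
       = \sum_j (l j)%:R * (a j 0 i)%:~R * monom x (a j)
         - lam * monom x a0 * \sum_j (l j)%:R * (a j 0 i)%:~R.
      by rewrite mulr_sumr -sumrB; apply: eq_bigr => j _; ring.
    rewrite e -hr; ring.
  have hy j : monom x (a j) = lam * monom x a0.
    have := indK iota hA H' j; move/eqP; rewrite mulf_eq0 (negbTE (natrK_neq0 iota (hl j))) /=.
    by rewrite subr_eq0 => /eqP.
  have hm : monom x a0 ^+ l0 = \prod_j monom x (a j) ^+ l j.
    rewrite -monomMn // -scaler_nat natz hrel monom_sum //.
    by apply: eq_bigr => j _; rewrite -monomMn // -scaler_nat natz.
  have e2 : \prod_j monom x (a j) ^+ l j = \prod_j (lam * monom x a0) ^+ l j.
    by apply: eq_bigr => j _; rewrite hy.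
  rewrite e2 in hm.
  rewrite prodrXr -hsum exprMn in hm.
  have hl1 : lam ^+ l0 = 1.
    apply/eqP; rewrite -subr_eq0; apply/eqP.
    apply: (mulIf (expf_neq0 l0 (monom_neq0 a0 hx))).
    by rewrite mul0r mulrBl mul1r -hm subrr.
  move: hl1; rewrite /lam -rmorphXn -(rmorph1 iota) => /fmorph_inj.
  rewrite /lamC -rmorphXn -(rmorph1 (@FracField.tofrac _)) => /eqP.
  rewrite tofrac_eq => /eqP hX.
  have := congr1 (fun p : {poly R[i]} => size p) hX; rewrite /= size_polyXn size_poly1.
  by case=> e; move: hl0; rewrite e.
have H' i : \sum_j (if `[< face_pts (Delta (R := R) a) w c (rV_of_int (a j)) >]
      then (l j)%:R * monom x (a j) else 0) * (a j 0 i)%:~R = 0.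
  have Hi := H i; rewrite leval_xdx big_map big_filter big_enum_cond /= big_mkcond /= in Hi.
  apply: etrans _ Hi; apply: eq_bigr => j _.
  by case: ifP => _; rewrite ?mul0r //= mulrAC.
have := indK iota hA H' j0; rewrite asboolT //; apply/eqP.
by rewrite mulf_neq0 ?(natrK_neq0 iota) ?monom_neq0.
Qed.
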